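(* Let $m\ge1$, let $p_1,\dots,p_m\ge 0$ with $p_1+\cdots+p_m=1$, and let $S$ be a finite nonempty word on $[m]$ all of whose letters have positive probability. Roll a die showing face $i$ with probability $p_i$ independently until $S$ first appears as a block of consecutive outcomes, and let $Y$ be the number of rolls. Then \[ \operatorname{Var}(Y) = E(Y^2)-E(Y)^2 = \left(\sum_{R\in\operatorname{overlap}(S)} \frac{1}{P(R)} \right)^2 + \sum_{R\in\operatorname{overlap}(S)} \frac{(1-|R|)^2-|R|^2}{P(R)}. \]
   Context: For a word $w=w_1\cdots w_\ell$, $|w|=\ell$ and $P(w)=p_{w_1}\cdots p_{w_\ell}$. An overlap of $S$ is a nonempty word that is both a prefix and a suffix of $S$ (including $S$ itself); $\operatorname{overlap}(S)$ is the set of overlaps. *)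

(* Defs.v *)
From HB Require Import structures.
From mathcomp Require Import all_boot all_order all_algebra.
From mathcomp Require Import all_classical all_reals.
From mathcomp Require Import topology normedtype sequences.
Set Implicit Arguments. Unset Strict Implicit. Unset Printing Implicit Defensive.
Import Order.TTheory GRing.Theory Num.Theory.
Local Open Scope ring_scope.

Definition wprob (R : pzRingType) (m : nat) (p : 'I_m -> R) (w : seq 'I_m) : R :=
  \prod_(i <- w) p i.

Definition overlap (m : nat) (S : seq 'I_m) : seq (seq 'I_m) :=
  [seq take k S | k <- iota 1 (size S) & take k S == drop (size S - k) S].

(* S appears for the first time as a block ending exactly at the last letter
   of w: S is a suffix of w and S is not a block of w with its last letter removed. *)
Definition first_occ (m : nat) (S w : seq 'I_m) : bool :=
  suffix S w && ~~ infix S (take (size w).-1 w).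

(* P(Y = n): the probability that S first appears after exactly n rolls,
   i.e. the total probability of outcomes (w_1..w_n) of the first n rolls
   in which S first occurs ending at roll n. *)
Definition probY (R : pzRingType) (m : nat) (p : 'I_m -> R) (S : seq 'I_m) (n : nat) : R :=
  \sum_(w : n.-tuple 'I_m | first_occ S w) wprob p w.

(* Main.v *)
Require Import Defs.
From HB Require Import structures.
From mathcomp Require Import all_boot all_order all_algebra.
From mathcomp Require Import all_classical all_reals.
From mathcomp Require Import topology normedtype sequences.
From mathcomp Require Import ring lra zify.
Import Order.TTheory GRing.Theory Num.Theory.
Import numFieldNormedType.Exports.
Local Open Scope classical_set_scope.
Local Open Scope ring_scope.
Section Analytic.
Variable R : realType.

Lemma cvg_sum_seq (I : Type) (r : seq I) (P : pred I) (f : I -> nat -> R) (l : I -> R) :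
  (forall i, P i -> f i n @[n --> \oo] --> l i) ->
  (\sum_(i <- r | P i) f i n) @[n --> \oo] --> \sum_(i <- r | P i) l i.
Proof.
move=> H; elim: r => [|i r IH].
  rewrite big_nil; under eq_cvg do rewrite big_nil; exact: cvg_cst.
rewrite big_cons; case Pi: (P i).
  under eq_cvg do rewrite big_cons Pi.
  exact: cvgD (H _ Pi) IH.
by under eq_cvg do rewrite big_cons Pi.
Qed.

Lemma geo_aux (t : R) : 0 <= t <= 1 -> forall n,
  (n.+1)%:R * t ^+ n * (1 - t) <= 1 - t ^+ n.+1.
Proof.
move=> /andP[t0 t1]; elim=> [|n IH]; first by rewrite expr0 expr1 !mul1r.
have x0 : 0 <= t ^+ n by apply: exprn_ge0.
have x1 : t ^+ n <= 1 by apply: exprn_ile1.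
rewrite exprS in IH; rewrite !exprS mulrS.
set x := t ^+ n in x0 x1 IH *; set N := n.+1%:R in IH *.
have N0 : 0 <= N by rewrite /N ler0n.
have h2 : 0 <= (1 - t) * (1 - t * x).
  apply: mulr_ge0; first lra.
  have : t * x <= 1 by rewrite -(mulr1 1); apply: ler_pM.
  lra.
nra.
Qed.

Lemma geo_bound (t : R) : 0 <= t < 1 -> forall n,
  (n.+1)%:R * t ^+ n <= (1 - t)^-1.
Proof.
move=> /andP[t0 t1] n.
have t1' : t <= 1 by apply: ltW.
have h := @geo_aux t (introT andP (conj t0 t1')) n.
have tn : 0 <= t ^+ n.+1 by apply: exprn_ge0.
rewrite -(mul1r (1-t)^-1) ler_pdivlMr ?subr_gt0 //.
lra.
Qed.

Lemma bern (x : R) N : 0 <= x <= 1 -> 1 - N%:R * x <= (1 - x) ^+ N.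
Proof.
move=> /andP[x0 x1]; elim: N => [|N IH]; first by rewrite expr0 mul0r subr0.
rewrite exprS mulrS.
have y0 : 0 <= (1 - x) ^+ N by apply: exprn_ge0; lra.
set y := (1 - x) ^+ N in y0 IH *; set M := N%:R in IH *.
have M0 : 0 <= M by rewrite /M ler0n.
nra.
Qed.

Lemma decay (a : nat -> R) (k : nat) (r : R) : (0 < k)%N -> 0 <= r < 1 ->
  (forall n, 0 <= a n) -> (forall n, a n <= 1) ->
  (forall n, a (n + k)%N <= r * a n) ->
  (fun n => (n.+1)%:R ^+ 2 * a n) @ \oo --> 0.
Proof.
move=> k0 /andP[r0 r1] a0 a1 ak.
have hi : forall i s, a (i * k + s)%N <= r ^+ i.
  elim=> [|i IH] s; first by rewrite expr0 mul0n add0n.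
  have -> : (i.+1 * k + s = (i * k + s) + k)%N by rewrite mulSn; lia.
  apply: le_trans (ak _) _; rewrite exprS; exact: ler_wpM2l.
have kR : 0 < k%:R :> R by rewrite ltr0n.
set t := 1 - (1 - r) / (8 * k)%:R.
have x0 : 0 <= (1 - r) / (8 * k)%:R by apply: divr_ge0; [lra | rewrite ler0n].
have x1 : (1 - r) / (8 * k)%:R <= 1 / 8.
  rewrite ler_pdivrMr ?ltr0n ?muln_gt0 //= natrM.
  have : 1 <= k%:R :> R by rewrite ler1n.
  move=> hk; lra.
have xpos : 0 < (1 - r) / (8 * k)%:R by apply: divr_gt0; [lra | rewrite ltr0n muln_gt0].
have t0 : 0 < t by rewrite /t; lra.
have t1 : t < 1 by rewrite /t; lra.
have rt : r <= t ^+ (4 * k).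
  have x1' : (1 - r) / (8 * k)%:R <= 1 by lra.
  have := @bern ((1 - r) / (8 * k)%:R) (4 * k) (introT andP (conj x0 x1')).
  rewrite -/t.
  have -> : (4 * k)%:R * ((1 - r) / (8 * k)%:R) = (1 - r) / 2 :> R.
    have k0' : k%:R != 0 :> R by rewrite pnatr_eq0 -lt0n.
    rewrite !natrM; field.
    exact: k0'.
  lra.
have tk0 : 0 < t ^+ (4 * k) by apply: exprn_gt0.
have han : forall n, a n <= t ^+ (4 * n) / t ^+ (4 * k).
  move=> n; rewrite {1}(divn_eq n k).
  apply: le_trans (hi _ _) _.
  apply: (@le_trans _ _ ((t ^+ (4 * k)) ^+ (n %/ k))).
    apply: lerXn2r; rewrite ?nnegrE //; apply: ltW; exact: tk0.
  rewrite ler_pdivlMr // -!exprM -exprD.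
  apply: ler_wiXn2l; [lra | lra |].
  have := ltn_pmod n k0; have := divn_eq n k; lia.
have hb : forall n, (n.+1)%:R ^+ 2 * a n <=
    (((1 - t)^-1) ^+ 2 / t ^+ (4 * k)) * (t ^+ 2) ^+ n.
  move=> n.
  have e0 : 0 <= (n.+1)%:R ^+ 2 :> R by apply: exprn_ge0.
  apply: le_trans (ler_wpM2l e0 (han n)) _.
  have g := @geo_bound t (introT andP (conj (ltW t0) t1)) n.
  have g0 : 0 <= (n.+1)%:R * t ^+ n by apply: mulr_ge0; [rewrite ler0n | apply: exprn_ge0; lra].
  have -> : (n.+1)%:R ^+ 2 * (t ^+ (4 * n) / t ^+ (4 * k)) =
     ((n.+1)%:R * t ^+ n) ^+ 2 * (t ^+ 2) ^+ n / t ^+ (4 * k).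
    have e : t ^+ (4 * n) = (t ^+ n) ^+ 2 * (t ^+ 2) ^+ n.
      by rewrite -!exprM -exprD; congr (_ ^+ _); lia.
    rewrite e; ring.
  have g2 : ((n.+1)%:R * t ^+ n) ^+ 2 <= ((1 - t)^-1) ^+ 2.
    by apply: lerXn2r; rewrite ?nnegrE // invr_ge0; lra.
  have p0 : 0 <= (t ^+ 2) ^+ n / t ^+ (4 * k).
    by apply: divr_ge0; apply: exprn_ge0; [apply: exprn_ge0|]; lra.
  have h3 := ler_wpM2r p0 g2.
  have E1 : ((n.+1)%:R * t ^+ n) ^+ 2 * (t ^+ 2) ^+ n / t ^+ (4 * k) =
    ((n.+1)%:R * t ^+ n) ^+ 2 * ((t ^+ 2) ^+ n / t ^+ (4 * k)) by ring.
  have E2 : (1 - t)^-1 ^+ 2 / t ^+ (4 * k) * (t ^+ 2) ^+ n =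
    (1 - t)^-1 ^+ 2 * ((t ^+ 2) ^+ n / t ^+ (4 * k)) by ring.
  by rewrite E1 E2.
apply: (@squeeze_cvgr _ _ _ _ (fun=> 0) (fun n => (((1 - t)^-1) ^+ 2 / t ^+ (4 * k)) * (t ^+ 2) ^+ n)).
- apply: nearW => n; apply/andP; split; last exact: hb.
  by apply: mulr_ge0; [apply: exprn_ge0; rewrite ler0n | apply: a0].
- exact: cvg_cst.
- rewrite -(mulr0 (((1 - t)^-1) ^+ 2 / t ^+ (4 * k))).
  apply: cvgMl_tmp; apply: cvg_expr.
  rewrite ger0_norm; last by apply: exprn_ge0; lra.
  rewrite expr2; nra.
Qed.

Lemma sq0 (u v : nat -> R) : (forall n, 0 <= u n <= v n) ->
  v @ \oo --> 0 -> u @ \oo --> 0.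
Proof.
move=> h hv; apply: (@squeeze_cvgr _ _ _ _ (fun=> 0) v) => //.
- by apply: nearW => n; exact: h.
- exact: cvg_cst.
Qed.

Lemma analytic (k : nat) (P : pred nat) (c : nat -> R) (M : R) (a q : nat -> R) :
  (0 < k)%N -> 1 <= M ->
  (forall j, P j -> 0 <= c j <= M) ->
  q 0%N = 0 -> (forall n, q n.+1 = a n - a n.+1) -> a 0%N = 1 ->
  (forall n, (n < k)%N -> q n = 0) -> (forall n, 0 <= q n) ->
  (forall n, a n = \sum_(j <- iota 1 k | P j) c j * q (n + j)%N) ->
  exists EY EY2 : R,
    [/\ (fun N : nat => \sum_(0 <= n < N) q n) @ \oo --> (1 : R),
        (fun N : nat => \sum_(0 <= n < N) n%:R * q n) @ \oo --> EY,
        (fun N : nat => \sum_(0 <= n < N) (n%:R ^+ 2) * q n) @ \oo --> EY2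
      & EY2 - EY ^+ 2 = (\sum_(j <- iota 1 k | P j) c j) ^+ 2
          + \sum_(j <- iota 1 k | P j) (((1 - j%:R) ^+ 2 - j%:R ^+ 2) * c j)].
Proof.
move=> k0 M1 hc hq0 hqS ha0 hqk hq hrec.
have ha : forall n, 0 <= a n.
  move=> n; rewrite hrec; apply: sumr_ge0 => j Pj; apply: mulr_ge0; last exact: hq.
  by case/andP: (hc j Pj).
have hmono : forall n, a n.+1 <= a n by move=> n; have := hqS n; have := hq n.+1; lra.
have hle1 : forall n, a n <= 1.
  by elim=> [|n IH]; [rewrite ha0 | apply: le_trans (hmono n) IH].
have ha1 : forall n, (n < k)%N -> a n = 1.
  elim=> [//|n IH] hn; have := hqS n; rewrite hqk // (IH (ltnW hn)); lra.
have htel : forall n K, \sum_(j <- iota 1 K) q (n + j)%N = a n - a (n + K)%N.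
  move=> n; elim=> [|K IH]; first by rewrite big_nil addn0 subrr.
  rewrite -[K.+1]addn1 iotaD big_cat big_seq1 IH add1n addnS hqS addnA addn1 /=; ring.
have hdec : forall n, a (n + k)%N <= ((M - 1) / M) * a n.
  move=> n.
  have h1 : a n <= M * (a n - a (n + k)%N).
    rewrite -htel mulr_sumr {1}hrec.
    rewrite [X in _ <= X](bigID P) /= -[X in X <= _]addr0.
    apply: lerD.
      apply: ler_sum => j Pj; apply: ler_wpM2r; [exact: hq | by case/andP: (hc j Pj)].
    apply: sumr_ge0 => j _; apply: mulr_ge0; [lra | exact: hq].
  have M0 : 0 < M by lra.
  rewrite mulrAC ler_pdivlMr //.
  have := ha n; have := ha (n + k)%N; nra.
have hr : 0 <= (M - 1) / M < 1.
  have M0 : 0 < M by lra.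
  apply/andP; split; first by apply: divr_ge0; lra.
  by rewrite ltr_pdivrMr // mul1r; lra.
have hg := @decay a k ((M - 1) / M) k0 hr ha hle1 hdec.
have z0 : forall t, (fun n => a (n + t)%N) @ \oo --> 0.
  move=> t; rewrite cvg_shiftn.
  apply: sq0 hg => n; rewrite ha /=.
  have e : 1 <= (n.+1)%:R ^+ 2 :> R by rewrite -natrX ler1n expn_gt0.
  have := ha n; nra.
have z1 : forall t, (fun n => n%:R * a (n + t)%N) @ \oo --> 0.
  move=> t; have hg' : (fun n => ((n + t)%N.+1)%:R ^+ 2 * a (n + t)%N) @ \oo --> 0.
    by rewrite (cvg_shiftn t (fun n => (n.+1)%:R ^+ 2 * a n)).
  apply: sq0 hg' => n; apply/andP; split; first by apply: mulr_ge0; [rewrite ler0n | exact: ha].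
  apply: ler_wpM2r; first exact: ha.
  rewrite -natrX ler_nat; apply: (@leq_trans (n + t).+1); first lia.
  by rewrite -{1}(muln1 (n + t).+1) expnS expn1 leq_mul2l ltn0Sn.
have z1' : (fun n => n%:R * a n) @ \oo --> 0.
  apply: sq0 hg => n; apply/andP; split; first by apply: mulr_ge0; [rewrite ler0n | exact: ha].
  apply: ler_wpM2r; first exact: ha.
  by rewrite -natrX ler_nat; rewrite expnS expn1; apply: (@leq_trans n.+1); [|rewrite leq_pmulr].
have z2 : (fun n => n%:R ^+ 2 * a n) @ \oo --> 0.
  apply: sq0 hg => n; apply/andP; split; first by apply: mulr_ge0; [apply: exprn_ge0; rewrite ler0n | exact: ha].
  apply: ler_wpM2r; first exact: ha.
  by rewrite -!natrX ler_nat leq_exp2r.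
have z00 : a @ \oo --> 0.
  apply: sq0 hg => n; rewrite ha /=.
  have e : 1 <= (n.+1)%:R ^+ 2 :> R by rewrite -natrX ler1n expn_gt0.
  have := ha n; nra.
have nS : forall n, (n.+1)%:R = n%:R + 1 :> R by move=> n; rewrite natr1.
pose A N := \sum_(0 <= n < N) a n.
pose B N := \sum_(0 <= n < N) n%:R * a n.
pose C := \sum_(j <- iota 1 k | P j) c j.
have AS : forall n, A n.+1 = A n + a n by move=> n; rewrite /A big_nat_recr.
have I1 : forall N, \sum_(0 <= n < N.+1) q n = 1 - a N.
  elim=> [|N IH]; first by rewrite big_nat1 hq0 ha0 subrr.
  by rewrite big_nat_recr //= IH hqS; ring.
have I2 : forall N, \sum_(0 <= n < N.+1) n%:R * q n = A N - N%:R * a N.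
  elim=> [|N IH]; first by rewrite big_nat1 hq0 /A big_geq // mul0r; ring.
  by rewrite big_nat_recr //= IH hqS AS -natr1; ring.
have I3 : forall N, \sum_(0 <= n < N.+1) n%:R ^+ 2 * q n = 2 * B N + A N - N%:R ^+ 2 * a N.
  elim=> [|N IH]; first by rewrite big_nat1 hq0 /A /B !big_geq //; ring.
  by rewrite big_nat_recr //= IH hqS AS /B big_nat_recr //= -/(B N) -natr1; ring.
have hAj : forall j, (j <= k)%N -> A j = j%:R.
  elim=> [|j IH] hj; first by rewrite /A big_geq.
  by rewrite AS IH ?(ltnW hj) // ha1 // -natr1.
have Tq : forall N j, (0 < j <= k)%N -> \sum_(0 <= n < N) q (n + j)%N = 1 - a (N + j.-1)%N.
  move=> N j /andP[j0 jk]; case: j j0 jk => // j _ jk /=.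
  elim: N => [|N IH]; first by rewrite big_geq // add0n ha1 // subrr.
  by rewrite big_nat_recr //= IH addnS hqS addSn; ring.
have Tn : forall N j, (0 < j <= k)%N -> \sum_(0 <= n < N) n%:R * q (n + j)%N =
    A (N + j)%N - j%:R - N%:R * a (N + j.-1)%N.
  move=> N j /andP[j0 jk]; case: j j0 jk => // j _ jk /=.
  elim: N => [|N IH]; first by rewrite big_geq // add0n hAj // mul0r subrr subr0.
  rewrite big_nat_recr //= IH !addSn !addnS (AS (N + j).+1) hqS !nS; ring.
have IA : forall N, A N = C - \sum_(j <- iota 1 k | P j) c j * a (N + j.-1)%N.
  move=> N; rewrite /A.
  under eq_bigr do rewrite hrec.
  rewrite exchange_big /=.
  under eq_bigr do rewrite -mulr_sumr.
  transitivity (\sum_(j <- iota 1 k | P j) c j * (1 - a (N + j.-1)%N)).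
    rewrite big_seq_cond [RHS]big_seq_cond; apply: eq_bigr => j /andP[jin Pj].
    rewrite mem_iota in jin; rewrite Tq //; lia.
  by rewrite /C -sumrB; apply: eq_bigr => j _; ring.
have IB : forall N, B N = \sum_(j <- iota 1 k | P j) c j *
     (A (N + j)%N - j%:R - N%:R * a (N + j.-1)%N).
  move=> N; rewrite /B.
  under eq_bigr do rewrite hrec mulr_sumr.
  rewrite exchange_big /=.
  rewrite big_seq_cond [RHS]big_seq_cond; apply: eq_bigr => j /andP[jin Pj].
  rewrite mem_iota in jin; rewrite -Tn; last by lia.
  by rewrite mulr_sumr; apply: eq_bigr => n _; ring.
have LA : A @ \oo --> C.
  have -> : A = (fun N => C - \sum_(j <- iota 1 k | P j) c j * a (N + j.-1)%N).
    by apply: funext => N; exact: IA.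
  have := cvgB (cvg_cst C) (@cvg_sum_seq _ (iota 1 k) P
     (fun j N => c j * a (N + j.-1)%N) (fun j => c j * 0) (fun j _ => cvgMl_tmp (z0 j.-1))).
  have e0 : \sum_(j <- iota 1 k | P j) c j * 0 = 0 by apply: big1 => j _; rewrite mulr0.
  by rewrite e0 subr0 => H; exact: H.
pose Bl := \sum_(j <- iota 1 k | P j) c j * (C - j%:R).
have LB : B @ \oo --> Bl.
  have -> : B = (fun N => \sum_(j <- iota 1 k | P j) c j *
     (A (N + j)%N - j%:R - N%:R * a (N + j.-1)%N)).
    by apply: funext => N; exact: IB.
  have := @cvg_sum_seq _ (iota 1 k) P
     (fun j N => c j * (A (N + j)%N - j%:R - N%:R * a (N + j.-1)%N))
     (fun j => c j * (C - j%:R)).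
  apply => j Pj; apply: cvgMl_tmp; rewrite -[C - j%:R]subr0; apply: cvgB; last exact: z1.
  apply: cvgB; last exact: cvg_cst.
  by rewrite (cvg_shiftn j A).
exists C, (2 * Bl + C); split.
- rewrite -cvg_shiftS /=.
  have -> : (fun n => \sum_(0 <= n0 < n.+1) q n0) = (fun N => 1 - a N) by apply: funext => N; exact: I1.
  by have := cvgB (cvg_cst (1:R)) z00; rewrite subr0 => H; exact: H.
- rewrite -cvg_shiftS /=.
  have -> : (fun n => \sum_(0 <= n0 < n.+1) n0%:R * q n0) = (fun N => A N - N%:R * a N)
    by apply: funext => N; exact: I2.
  by have := cvgB LA z1'; rewrite subr0 => H; exact: H.
- rewrite -cvg_shiftS /=.
  have -> : (fun n => \sum_(0 <= n0 < n.+1) n0%:R ^+ 2 * q n0) =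
     (fun N => 2 * B N + A N - N%:R ^+ 2 * a N) by apply: funext => N; exact: I3.
  have := cvgB (cvgD (cvgMl_tmp (a := 2) LB) LA) z2.
  by rewrite subr0 => H; exact: H.
- have eB : Bl = C * C - \sum_(j <- iota 1 k | P j) j%:R * c j.
    by rewrite /Bl {2}/C mulr_suml -sumrB; apply: eq_bigr => j _; ring.
  have eD : \sum_(j <- iota 1 k | P j) (((1 - j%:R) ^+ 2 - j%:R ^+ 2) * c j) =
      C - 2 * \sum_(j <- iota 1 k | P j) j%:R * c j.
    by rewrite /C mulr_sumr -sumrB; apply: eq_bigr => j _; ring.
  rewrite eD eB -/C; ring.
Qed.
End Analytic.
Section Comb.
Variables (R : realType) (m : nat) (p : 'I_m -> R).

Definition W (n : nat) (F : seq 'I_m -> R) : R := \sum_(w : n.-tuple 'I_m) F w.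

Lemma W0 F : W 0 F = F [::].
Proof.
rewrite /W (bigD1 [tuple]) //= big1 ?addr0 // => t; rewrite [t]tuple0 => /eqP h; exfalso; by apply: h.
Qed.

Lemma WS n F : W n.+1 F = \sum_(i : 'I_m) W n (fun w => F (i :: w)).
Proof.
rewrite /W (reindex (fun x : 'I_m * n.-tuple 'I_m => cons_tuple x.1 x.2)) /=.
  by rewrite pair_bigA.
exists (fun t : n.+1.-tuple 'I_m => (thead t, [tuple of behead t])).
  by move=> [i w] _ /=; congr pair; apply: val_inj.
by move=> t _; apply: val_inj => /=; rewrite [in RHS](tuple_eta t).
Qed.

Lemma Wext n F G : (forall w, size w = n -> F w = G w) -> W n F = W n G.
Proof. by move=> h; apply: eq_bigr => w _; apply: h; exact: size_tuple. Qed.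

Lemma Wadd n j F : W (n + j) F = W n (fun w => W j (fun v => F (w ++ v))).
Proof.
elim: n F => [|n IH] F; first by rewrite W0.
change (W (n + j).+1 F = W n.+1 (fun w => W j (fun v => F (w ++ v)))).
by rewrite !WS; apply: eq_bigr => i _; rewrite IH.
Qed.

Lemma WD n F G : W n F + W n G = W n (fun w => F w + G w).
Proof. by rewrite /W -big_split. Qed.

Lemma W1 F : W 1 F = \sum_i F [:: i].
Proof. by rewrite WS; apply: eq_bigr => i _; rewrite W0. Qed.

Lemma Wpick j s G : size s = j -> (forall v, size v = j -> v != s -> G v = 0) -> W j G = G s.
Proof.
move=> hs h; have hs' : size s == j by rewrite hs.
rewrite /W (bigD1 (Tuple hs')) //= big1 ?addr0 // => v vt.
apply: h; first exact: size_tuple.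
by apply: contra vt => /eqP e; apply/eqP; apply: val_inj.
Qed.

Lemma wprob_cat u v : wprob p (u ++ v) = wprob p u * wprob p v.
Proof. by rewrite /wprob big_cat. Qed.

Lemma probY_W S n : probY p S n = W n (fun w => if first_occ S w then wprob p w else 0).
Proof. by rewrite /probY big_mkcond. Qed.


Lemma wprob1 i : wprob p [:: i] = p i.
Proof. by rewrite /wprob big_seq1. Qed.

Lemma ifE (b : bool) (x : R) : (if b then x else 0) = b%:R * x.
Proof. by case: b; rewrite ?mul1r ?mul0r. Qed.

Definition aS (S : seq 'I_m) n := W n (fun w => if ~~ infix S w then wprob p w else 0).

Lemma fo_cat1 (S w : seq 'I_m) (i : 'I_m) : first_occ S (w ++ [:: i]) = suffix S (w ++ [:: i]) && ~~ infix S w.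
Proof. by rewrite /first_occ size_cat /= addn1 /= (take_size_cat _ (erefl (size w))). Qed.

Lemma infix_cat1 (S w : seq 'I_m) (i : 'I_m) : infix S (w ++ [:: i]) = suffix S (w ++ [:: i]) || infix S w.
Proof. by rewrite cats1 infix_rconsl. Qed.

Lemma qS (hp1 : \sum_(i < m) p i = 1) (S : seq 'I_m) n : probY p S n.+1 = aS S n - aS S n.+1.
Proof.
suff -> : aS S n = probY p S n.+1 + aS S n.+1 by ring.
rewrite probY_W /aS -[n.+1]addn1 !Wadd WD; apply: Wext => w _.
rewrite !W1 -big_split /=.
have pt : forall i, (if first_occ S (w ++ [:: i]) then wprob p (w ++ [:: i]) else 0) +
   (if ~~ infix S (w ++ [:: i]) then wprob p (w ++ [:: i]) else 0) =
   (if ~~ infix S w then wprob p w * p i else 0).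
  move=> i; rewrite fo_cat1 infix_cat1 wprob_cat wprob1.
  by case: (suffix _ _); case: (infix S w) => /=; rewrite ?addr0 ?add0r.
rewrite (eq_bigr _ (fun i _ => pt i)); case: (infix S w) => /=.
  by rewrite big1.
by rewrite -mulr_sumr hp1 mulr1.
Qed.

Lemma probY_small (S : seq 'I_m) n : (n < size S)%N -> probY p S n = 0.
Proof.
move=> hn; rewrite probY_W /W big1 // => w _; rewrite /first_occ.
case: ifP => // /andP[/size_suffix h _]; move: h; rewrite size_tuple; by rewrite leqNgt hn.
Qed.

Lemma aS0 (S : seq 'I_m) : S != [::] -> aS S 0 = 1.
Proof. by move=> hS; rewrite /aS W0 infixs0 (negbTE hS) /= /wprob big_nil. Qed.

Lemma suffix_end (S w v : seq 'I_m) : suffix S (w ++ v) -> (size v <= size S)%N ->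
  v = drop (size S - size v) S.
Proof.
move=> /suffixP[t e] hv.
have : drop (size w) (w ++ v) = drop (size w) (t ++ S) by rewrite e.
have hsz : (size w + size v = size t + size S)%N by rewrite -!size_cat e.
rewrite drop_size_cat // drop_cat.
have -> : (size w < size t)%N = false by apply/negbTE; rewrite -leqNgt; lia.
by have -> : (size w - size t = size S - size v)%N by lia.
Qed.
Arguments suffix_end {S w v}.

Lemma countfo (S w : seq 'I_m) (x0 : 'I_m) : \sum_(j <- iota 1 (size S)) ((first_occ S (w ++ take j S))%:R : R)
   = (~~ infix S w)%:R.
Proof.
set k := size S.
pose g j := infix S (w ++ take j S).
have -> : iota 1 k = [seq (1 + i)%N | i <- iota 0 k] by rewrite -iotaDl.
rewrite big_map.
transitivity (\sum_(0 <= i < k) ((g i.+1)%:R - (g i)%:R : R)).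
  rewrite /index_iota subn0; apply: eq_big_seq => i; rewrite mem_iota => /andP[_ hi].
  rewrite add0n in hi; rewrite /g add1n (take_nth x0 hi) -cats1 catA fo_cat1 infix_cat1.
  by case: (suffix _ _); case: (infix S _) => /=; rewrite ?subrr ?subr0.
rewrite telescope_sumr // /g take_size take0 cats0 suffix_infix.
by case: (infix S w); rewrite /= ?subrr ?subr0.
Qed.

Lemma key (x0 : 'I_m) (S : seq 'I_m) n : (forall i, i \in S -> 0 < p i) ->
  aS S n = \sum_(j <- iota 1 (size S) | take j S == drop (size S - j) S)
      (wprob p (take j S))^-1 * probY p S (n + j).
Proof.
move=> hpos.
have PT : forall j, 0 < wprob p (take j S).
  by move=> j; rewrite /wprob big_seq; apply: prodr_gt0 => i /mem_take; exact: hpos.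
have Step1 : forall j, (0 < j <= size S)%N -> probY p S (n + j) =
    W n (fun w => if first_occ S (w ++ drop (size S - j) S)
       then wprob p w * wprob p (drop (size S - j) S) else 0).
  move=> j hj; rewrite probY_W Wadd; apply: Wext => w hw.
  rewrite (@Wpick j (drop (size S - j) S)).
  - by rewrite wprob_cat.
  - by rewrite size_drop subKn //; case/andP: hj.
  move=> v hv hne; case: ifP => // /andP[hsuf _]; exfalso; move/negP: hne; apply; apply/eqP.
  rewrite [LHS](suffix_end hsuf); first by congr (drop (_ - _) _); exact: hv.
  have hv2 : size v = j := hv; rewrite hv2; by case/andP: hj.
have Step2 : forall j, (0 < j <= size S)%N ->
   (if take j S == drop (size S - j) S then (wprob p (take j S))^-1 * probY p S (n + j) else 0)
   = W n (fun w => if first_occ S (w ++ take j S) then wprob p w else 0).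
  move=> j hj; case: ifP => hov.
    rewrite Step1 // -(eqP hov) /W mulr_sumr; apply: eq_bigr => w _.
    case: ifP => _; last by rewrite mulr0.
    have := PT j; move=> /lt0r_neq0 h; field; exact: h.
  rewrite /W; symmetry; apply: big1 => w _; case: ifP => // /andP[hsuf _].
  have hsz : size (take j S) = j by rewrite size_takel //; lia.
  have := suffix_end hsuf; rewrite hsz => /(_ _) e.
  by rewrite -e ?eqxx in hov; lia.
transitivity (\sum_(j <- iota 1 (size S)) W n (fun w => if first_occ S (w ++ take j S) then wprob p w else 0)); last first.
  rewrite [RHS]big_mkcond /= !big_seq; apply: eq_bigr => j; rewrite mem_iota => hj.
  by rewrite Step2 //; lia.
rewrite /aS /W exchange_big /=; apply: eq_bigr => w _.
rewrite ifE; under eq_bigr do rewrite ifE.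
by rewrite -mulr_suml countfo.
Qed.

End Comb.

Theorem corollary4p11 (R : realType) (m : nat) (p : 'I_m -> R)
  (hm : (1 <= m)%N) (hp0 : forall i, 0 <= p i) (hp1 : \sum_(i < m) p i = 1)
  (S : seq 'I_m) (hS : S != [::]) (hSpos : forall i, i \in S -> 0 < p i) :
  exists EY EY2 : R,
    [/\ (fun N : nat => \sum_(0 <= n < N) probY p S n) @ \oo --> (1 : R),
        (fun N : nat => \sum_(0 <= n < N) n%:R * probY p S n) @ \oo --> EY,
        (fun N : nat => \sum_(0 <= n < N) (n%:R ^+ 2) * probY p S n) @ \oo --> EY2
      & EY2 - EY ^+ 2 =
        (\sum_(T <- overlap S) (wprob p T)^-1) ^+ 2
        + \sum_(T <- overlap S)
            (((1 - (size T)%:R) ^+ 2 - (size T)%:R ^+ 2) / wprob p T)].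
Proof.
pose x0 : 'I_m := Ordinal hm.
have k0 : (0 < size S)%N by rewrite lt0n size_eq0.
have p1 : forall i, p i <= 1.
  by move=> i; rewrite -hp1 (bigD1 i) //= lerDl sumr_ge0.
have PS : 0 < wprob p S.
  by rewrite /wprob big_seq; apply: prodr_gt0 => i; exact: hSpos.
have PT : forall j, 0 < wprob p (take j S).
  by move=> j; rewrite /wprob big_seq; apply: prodr_gt0 => i /mem_take; exact: hSpos.
have wle1 : forall w, wprob p w <= 1.
  move=> w; rewrite /wprob; elim: w => [|x w IH]; first by rewrite big_nil.
  rewrite big_cons; apply: mulr_ile1 => //; apply: prodr_ge0 => *; exact: hp0.
have M1 : 1 <= (wprob p S)^-1 by rewrite invf_ge1 // wle1.
have hc : forall j, (take j S == drop (size S - j) S) ->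
    0 <= (wprob p (take j S))^-1 <= (wprob p S)^-1.
  move=> j _; apply/andP; split; first by rewrite invr_ge0 ltW.
  rewrite lef_pV2 ?posrE //.
  rewrite -{1}(cat_take_drop j S) wprob_cat.
  have := PT j; have := wle1 (drop j S); have : 0 <= wprob p (drop j S).
    by apply: prodr_ge0 => *; exact: hp0.
  nra.
have hq0 : forall n, 0 <= probY p S n.
  by move=> n; apply: sumr_ge0 => w _; apply: prodr_ge0 => *; exact: hp0.
have := @analytic R (size S) (fun j => take j S == drop (size S - j) S)
  (fun j => (wprob p (take j S))^-1) (wprob p S)^-1 (@aS R m p S) (probY p S)
  k0 M1 hc (@probY_small R m p S 0 k0) (@qS R m p hp1 S) (@aS0 R m p S hS)
  (@probY_small R m p S) hq0 (fun n => @key R m p x0 S n hSpos).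
move=> [EY [EY2 [h1 h2 h3 hid]]].
exists EY, EY2; split => //.
have ov1 : \sum_(T <- overlap S) (wprob p T)^-1 =
    \sum_(j <- iota 1 (size S) | take j S == drop (size S - j) S) (wprob p (take j S))^-1.
  by rewrite /overlap big_map big_filter.
have ov2 : \sum_(T <- overlap S) (((1 - (size T)%:R) ^+ 2 - (size T)%:R ^+ 2) / wprob p T) =
    \sum_(j <- iota 1 (size S) | take j S == drop (size S - j) S)
       (((1 - j%:R) ^+ 2 - j%:R ^+ 2) * (wprob p (take j S))^-1).
  rewrite /overlap big_map big_filter big_seq_cond [RHS]big_seq_cond.
  apply: eq_bigr => j /andP[jin _]; rewrite size_takel //.
  by move: jin; rewrite mem_iota add1n ltnS => /andP[].
by rewrite ov1 ov2.
Qed.
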